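(* Let $\mathcal{X}$ be a finite set of actions, $\mathcal{Y}$ a finite set of responses, $\mathcal{H}\subseteq\mathcal{Y}^{\mathcal{X}}$, $\mathrm{cost}:\mathcal{X}\times\mathcal{Y}\to\mathbb{R}_+$. Let $f:2^{\mathcal{X}\times\mathcal{Y}}\to\mathbb{R}_+$, $Q>0$, $\eta>0$ be such that $f$ is monotone non-decreasing and submodular, $f(\emptyset)=0$, for every $S$, $f(S)\ge Q-\eta$ implies $f(S)\ge Q$, and $f$ is consistency-aware for $Q$. Let $\mathcal{A}$ be an interactive algorithm that obtains $f(S)\ge Q$ at termination (i.e. $f(S^h[\mathcal{A}])\ge Q$ for all $h\in\mathcal{H}$). Let $\gamma=r_{\mathrm{cost}}$ if $\mathcal{A}$ is bifurcating, and $\gamma=R_{\mathrm{cost}}$ otherwise. Then there exists $x\in\mathcal{X}$ such that $$u^f(x,\emptyset)\ge \frac{Q}{\gamma\cdot\mathrm{cost}(\mathcal{A})}.$$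
   Context: The true state is an unknown $h^*\in\mathcal{H}$. An interactive algorithm $\mathcal{A}$, given the set $S\subseteq\mathcal{X}\times\mathcal{Y}$ of pairs observed so far, outputs either an action $\mathcal{A}(S)\in\mathcal{X}$ (yielding the pair $(x,h^*(x))$, which is added to $S$) or terminates. $S^h_t[\mathcal{A}]$ / $S^h[\mathcal{A}]$ denote the pairs collected in the first $t$ iterations / until termination when $h^*=h$. $\mathrm{cost}(S)=\sum_{(x,y)\in S}\mathrm{cost}(x,y)$, $\mathrm{cost}(\mathcal{A})=\max_{h\in\mathcal{H}}\mathrm{cost}(S^h[\mathcal{A}])$. Version space $V(S)=\{h\in\mathcal{H}\mid\forall(x,y)\in S,\ y=h(x)\}$; $\mathcal{Y}(x,S)=\{h(x)\mid h\in V(S)\}$. $\mathcal{A}$ is bifurcating if for all $t$ and $h\in\mathcal{H}$ (at which $\mathcal{A}$ selects an action), $|\mathcal{Y}(\mathcal{A}(S^h_t[\mathcal{A}]),S^h_t[\mathcal{A}])|\ge 2$. $f$ is consistency-aware for $Q$ if $f(S)\ge Q$ for all $S$ with $V(S)=\emptyset$. $\delta_g(z\mid A)=g(A\cup\{z\})-g(A)$; $u^f(x,S)=\min_{h\in V(S)}\frac{\delta_{\min(f,Q)}((x,h(x))\mid S)}{\mathrm{cost}(x,h(x))}$. Cost ratio: $R_{\mathrm{cost}}=\max_{x\in\mathcal{X}}\frac{\max_{y}\mathrm{cost}(x,y)}{\min_y\mathrm{cost}(x,y)}$. Second-smallest cost ratio: $\phi(x)$ is the second-smallest value in the multiset $\{\mathrm{cost}(x,y)\mid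 y\in\mathcal{Y}\}$ and $r_{\mathrm{cost}}=\max_{x,y}\frac{\mathrm{cost}(x,y)}{\phi(x)}$. *)

(* Defs.v *)
From HB Require Import structures.
From mathcomp Require Import all_boot all_order all_algebra.
From Stdlib Require ClassicalEpsilon.
Set Implicit Arguments. Unset Strict Implicit. Unset Printing Implicit Defensive.
Import Order.TTheory GRing.Theory Num.Theory.
Local Open Scope ring_scope.

Section Defs.
Variables (R : realFieldType) (X Y : finType).

Notation hyp := {ffun X -> Y}.
(* an interactive algorithm: given the observed set S, select an action or
   terminate (None) *)
Definition ialg := {set X * Y} -> option X.

Fixpoint run (A : ialg) (h : hyp) (t : nat) : {set X * Y} :=
  match t with
  | 0 => set0
  | t'.+1 => let S := run A h t' in
             match A S with
             | Some x => (x, h x) |: S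
             | None => S
             end
  end.

Definition terminates (A : ialg) (H : {set hyp}) : Prop :=
  forall h, h \in H -> exists t, A (run A h t) = None.

(* first termination time (chosen classically; meaningful when A terminates) *)
Definition stop_time (A : ialg) (h : hyp) : nat :=
  ClassicalEpsilon.epsilon (inhabits 0%N)
    (fun t => A (run A h t) = None /\ forall s, (s < t)%N -> A (run A h s) <> None).

Definition final (A : ialg) (h : hyp) : {set X * Y} := run A h (stop_time A h).

Definition costS (cost : X -> Y -> R) (S : {set X * Y}) : R :=
  \sum_(p in S) cost p.1 p.2.

(* cost(A) = max_{h in H} cost(S^h[A]) (costs are nonnegative) *)
Definition costA (cost : X -> Y -> R) (H : {set hyp}) (A : ialg) : R :=
  \big[Num.max/0]_(h in H) costS cost (final A h).

Definition V (H : {set hyp}) (S : {set X * Y}) : {set hyp} :=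
  [set h in H | [forall p in S, h p.1 == p.2]].

Definition Yset (H : {set hyp}) (x : X) (S : {set X * Y}) : {set Y} :=
  (fun h : hyp => h x) @: V H S.

Definition bifurcating (H : {set hyp}) (A : ialg) : Prop :=
  forall h t x, h \in H -> A (run A h t) = Some x ->
    (2 <= #|Yset H x (run A h t)|)%N.

Definition consistency_aware (H : {set hyp}) (f : {set X * Y} -> R) (Q : R) : Prop :=
  forall S : {set X * Y}, V H S = set0 -> Q <= f S.

Definition monotone (f : {set X * Y} -> R) : Prop :=
  forall S T : {set X * Y}, S \subset T -> f S <= f T.

Definition submodular (f : {set X * Y} -> R) : Prop :=
  forall S T : {set X * Y}, f (S :|: T) + f (S :&: T) <= f S + f T.

Definition deltaQ (f : {set X * Y} -> R) (Q : R) (z : X * Y) (S : {set X * Y}) : R :=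
  Num.min (f (z |: S)) Q - Num.min (f S) Q.

Definition ratio_u (f : {set X * Y} -> R) (Q : R) (cost : X -> Y -> R)
  (x : X) (S : {set X * Y}) (h : hyp) : R :=
  deltaQ f Q (x, h x) S / cost x (h x).

(* u^f(x,S) = min over h in V(S) (0 if V(S) is empty, never used) *)
Definition ufun (H : {set hyp}) (f : {set X * Y} -> R) (Q : R)
  (cost : X -> Y -> R) (x : X) (S : {set X * Y}) : R :=
  match [pick h in V H S] with
  | Some h0 => \big[Num.min/ratio_u f Q cost x S h0]_(h in V H S) ratio_u f Q cost x S h
  | None => 0
  end.

Definition maxcost (cost : X -> Y -> R) (x : X) : R := \big[Num.max/0]_y cost x y.
Definition mincost (cost : X -> Y -> R) (x : X) : R :=
  \big[Num.min/maxcost cost x]_y cost x y.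

Definition Rcost (cost : X -> Y -> R) : R :=
  \big[Num.max/0]_x (maxcost cost x / mincost cost x).

Definition phi (cost : X -> Y -> R) (x : X) : R :=
  nth 0 (sort <=%R [seq cost x y | y <- enum Y]) 1.

Definition rcost (cost : X -> Y -> R) : R :=
  \big[Num.max/0]_x \big[Num.max/0]_y (cost x y / phi cost x).

End Defs.

(* Main.v *)
Require Import Defs.
From HB Require Import structures.
From mathcomp Require Import all_boot all_order all_algebra.
From mathcomp Require Import ring lra.
From Stdlib Require Import ClassicalEpsilon Classical.
Import Order.TTheory GRing.Theory Num.Theory.
Local Open Scope ring_scope.

Lemma run_sub1 {X Y : finType} (A : ialg X Y) h t : run A h t \subset run A h t.+1.
Proof. by rewrite /=; case: (A _) => [x|] //; apply: subsetUr. Qed.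

Lemma run_mono {X Y : finType} (A : ialg X Y) h t t' : (t <= t')%N ->
  run A h t \subset run A h t'.
Proof.
move/subnK => <-; elim: (t' - t)%N => [|k IH] //.
by apply: subset_trans IH _; rewrite addSn; apply: run_sub1.
Qed.

Lemma run_pairs {X Y : finType} (A : ialg X Y) h t p : p \in run A h t -> p.2 = h p.1.
Proof.
elim: t => [|t IH] /=; first by rewrite inE.
case: (A _) => [x|]; last exact: IH.
by rewrite in_setU1 => /orP [/eqP -> //|]; exact: IH.
Qed.

Lemma V_anti {X Y : finType} (H : {set {ffun X -> Y}}) {S T : {set X * Y}} :
  S \subset T -> V H T \subset V H S.
Proof.
move=> ST; apply/subsetP => h; rewrite !inE => /andP [-> /forallP Hf] /=.
apply/forallP => p; apply/implyP => pS; exact: (implyP (Hf p)) (subsetP ST _ pS).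
Qed.

Lemma inV {X Y : finType} (H : {set {ffun X -> Y}}) (S : {set X * Y}) h :
  h \in V H S -> h \in H /\ forall p, p \in S -> h p.1 = p.2.
Proof.
rewrite inE => /andP [-> /forallP Hf]; split => // p pS.
by apply/eqP; exact: (implyP (Hf p)).
Qed.

Lemma run_agree {X Y : finType} (H : {set {ffun X -> Y}}) (A : ialg X Y) g h t :
  h \in V H (run A g t) -> run A h t = run A g t.
Proof.
elim: t => [|t IH] hV //.
have hV' : h \in V H (run A g t) by have := subsetP (V_anti H (run_sub1 A g t)); move=> /(_ h hV).
move: hV; rewrite /= (IH hV'); case E: (A _) => [x|] //.
move/inV => [_ Hp]; by rewrite (Hp (x, g x)) // setU11.
Qed.

Lemma stop_spec {X Y : finType} (A : ialg X Y) h :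
  (exists t, A (run A h t) = None) ->
  A (run A h (stop_time A h)) = None.
Proof.
move=> [t Ht].
have ex : exists n, A (run A h n) == None by exists t; rewrite Ht.
case: (ex_minnP ex) => m /eqP Hm Hmin.
have P : exists t, A (run A h t) = None /\ forall s, (s < t)%N -> A (run A h s) <> None.
  exists m; split => // s sm Hs; move: (Hmin s); rewrite Hs eqxx => /(_ isT).
  by rewrite leqNgt sm.
by case: (epsilon_spec (inhabits 0%N) _ P).
Qed.

Lemma run_const {X Y : finType} (A : ialg X Y) h t k :
  A (run A h t) = None -> run A h (k + t) = run A h t.
Proof. move=> Ht; elim: k => [|k IH] //=; by rewrite IH Ht. Qed.

Lemma final_run {X Y : finType} (A : ialg X Y) h N :
  (exists t, A (run A h t) = None) -> (stop_time A h <= N)%N ->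
  final A h = run A h N.
Proof.
move=> ex /subnK <-; rewrite /final run_const //; exact: stop_spec.
Qed.

Lemma run_nonempty {X Y : finType} (A : ialg X Y) h t :
  run A h t != set0 -> exists s x, A (run A h s) = Some x.
Proof.
elim: t => [|t IH] /=; first by rewrite eqxx.
case E: (A _) => [x|]; first by exists t, x.
exact: IH.
Qed.


Lemma costS_ge0 {R : realFieldType} {X Y : finType} (cost : X -> Y -> R) (S : {set X * Y}) :
  (forall x y, 0 < cost x y) -> 0 <= costS cost S.
Proof. by move=> cp; apply: sumr_ge0 => p _; apply: ltW. Qed.

Lemma costS_U1 {R : realFieldType} {X Y : finType} (cost : X -> Y -> R) (p : X * Y) (S : {set X * Y}) :
  (forall x y, 0 < cost x y) -> costS cost (p |: S) <= cost p.1 p.2 + costS cost S.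
Proof.
move=> cp; case pS: (p \in S).
  rewrite (setUidPr _); last by rewrite sub1set.
  by rewrite lerDr ltW.
by rewrite /costS big_setU1 ?pS.
Qed.

Lemma costS_U1_eq {R : realFieldType} {X Y : finType} (cost : X -> Y -> R) (p : X * Y) (S : {set X * Y}) :
  p \notin S -> costS cost (p |: S) = cost p.1 p.2 + costS cost S.
Proof. by move=> pS; rewrite /costS big_setU1. Qed.

Lemma costS_sub {R : realFieldType} {X Y : finType} (cost : X -> Y -> R) (S T : {set X * Y}) :
  (forall x y, 0 < cost x y) -> S \subset T -> costS cost S <= costS cost T.
Proof.
move=> cp ST; rewrite /costS [X in _ <= X](big_setID S) /= (setIidPr ST) lerDl.
by apply: sumr_ge0 => p _; apply: ltW.
Qed.

Lemma submod_sum {R : realFieldType} {X Y : finType} (f : {set X * Y} -> R) :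
  (forall S, 0 <= f S) -> submodular f -> f set0 = 0 ->
  forall S, f S <= \sum_(p in S) f [set p].
Proof.
move=> f0 sm fe S; move: {2}#|S| (erefl #|S|) => n; elim: n S => [|n IH] S cS.
  by move/eqP: cS; rewrite cards_eq0 => /eqP ->; rewrite fe big_set0.
have [p pS] : exists p, p \in S.
  by apply/set0Pn; rewrite -card_gt0 cS.
rewrite (big_setD1 p pS) /=.
have Hs := sm [set p] (S :\ p).
have h0 := f0 ([set p] :&: (S :\ p)).
have IH' : f (S :\ p) <= \sum_(q in S :\ p) f [set q].
  by apply: IH; move: cS; rewrite (cardsD1 p S) pS; case.
rewrite -{1}(setD1K pS). lra.
Qed.


Lemma count_enum_card {Y : finType} (P : pred Y) : count P (enum Y) = #|P|.
Proof. by rewrite cardE enumT /enum_mem size_filter; apply: eq_count => y. Qed.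

Lemma phi_two {R : realFieldType} {X Y : finType} (cost : X -> Y -> R) x (y1 y2 : Y) :
  (forall x y, 0 < cost x y) -> y1 != y2 ->
  0 < phi cost x /\ (phi cost x <= cost x y1 \/ phi cost x <= cost x y2).
Proof.
move=> cp ne.
set m := [seq cost x y | y <- enum Y].
set s := sort <=%R m.
have card2 : (1 < #|Y|)%N by apply/card_gt1P; exists y1, y2.
have sz : (1 < size s)%N by rewrite size_sort size_map -cardT.
have phis : phi cost x = nth 0 s 1 by [].
split.
  have : nth 0 s 1 \in m by rewrite -(perm_mem (permEl (perm_sort <=%R m))) mem_nth.
  by rewrite phis; case/mapP => y _ ->.
case: (lerP (phi cost x) (cost x y1)) => h1; [by left|].
case: (lerP (phi cost x) (cost x y2)) => h2; [by right|].
exfalso.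
have c2 : (1 < count (fun c : R => (c < phi cost x)%R) m)%N.
  rewrite count_map count_enum_card; apply/card_gt1P; exists y1, y2.
  by rewrite !inE /= h1 h2.
have c1 : (count (fun c : R => (c < phi cost x)%R) s <= 1)%N.
  have srt : sorted <=%R s by apply: sort_le_sorted.
  move: srt sz phis; case: s => [|a [|b r]] //= /andP [_ pb] _ ->.
  have := order_path_min le_trans pb => /allP al.
  rewrite ltxx add0n (@eq_in_count _ _ pred0) ?count_pred0 ?addn0 ?leq_b1 //.
  by move=> c /al /=; rewrite leNgt => /negbTE.
move: c2; rewrite -(permP (permEl (perm_sort <=%R m))) /= => c2.
by move: (leq_trans c2 c1).
Qed.


Lemma Rcost_bound {R : realFieldType} {X Y : finType} (cost : X -> Y -> R) x y y' :
  (forall x y, 0 < cost x y) ->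
  1 <= Rcost cost /\ cost x y <= Rcost cost * cost x y'.
Proof.
move=> cp.
have hM : cost x y <= maxcost cost x by apply: le_bigmax.
have Mp : 0 < maxcost cost x by apply: lt_le_trans hM.
have mle : mincost cost x <= cost x y' by apply: bigmin_le.
have mp : 0 < mincost cost x.
  by rewrite /mincost; apply: (big_ind (fun v => 0 < v)) => // a b; rewrite lt_min => -> ->.
have mM : mincost cost x <= maxcost cost x.
  by rewrite /mincost; apply: (big_ind (fun v => v <= maxcost cost x)) => // [a b|i _];
   [rewrite ge_min => -> | apply: le_bigmax].
have hR : maxcost cost x / mincost cost x <= Rcost cost.
  by rewrite /Rcost; apply: (le_bigmax _ (fun x => maxcost cost x / mincost cost x)).
have r1 : 1 <= maxcost cost x / mincost cost x by rewrite ler_pdivlMr // mul1r.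
split; first exact: le_trans r1 hR.
apply: (le_trans hM).
have -> : maxcost cost x = (maxcost cost x / mincost cost x) * mincost cost x.
  by rewrite divfK // gt_eqF.
apply: ler_pM => //; [by apply: divr_ge0; apply: ltW | exact: ltW].
Qed.

Lemma rcost_bound {R : realFieldType} {X Y : finType} (cost : X -> Y -> R) x y y' :
  (forall x y, 0 < cost x y) -> 0 < phi cost x -> phi cost x <= cost x y' ->
  1 <= rcost cost /\ cost x y <= rcost cost * cost x y'.
Proof.
move=> cp pp ple.
have hr : forall z, cost x z / phi cost x <= rcost cost.
  move=> z; rewrite /rcost.
  apply: le_trans (le_bigmax _ (fun x => \big[Num.max/0]_y (cost x y / phi cost x)) x).
  exact: (le_bigmax _ (fun y => cost x y / phi cost x)).
have r1 : 1 <= rcost cost.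
  by apply: le_trans (hr y'); rewrite ler_pdivlMr // mul1r.
split => //.
have := hr y; rewrite ler_pdivrMr // => h.
apply: le_trans h _; apply: ler_wpM2l => //; apply: le_trans r1; lra.
Qed.

Lemma gamma_step {R : realFieldType} {X Y : finType} (H : {set {ffun X -> Y}})
  (cost : X -> Y -> R) (A : ialg X Y) (gamma : R) :
  (forall x y, 0 < cost x y) ->
  (bifurcating H A -> gamma = rcost cost) ->
  (~ bifurcating H A -> gamma = Rcost cost) ->
  forall h s x y, h \in H -> A (run A h s) = Some x ->
  exists2 h', h' \in V H (run A h s) & 1 <= gamma /\ cost x y <= gamma * cost x (h' x).
Proof.
move=> cp gb gn h s x y hH E.
have hV : h \in V H (run A h s).
  rewrite inE hH /=; apply/forallP => p; apply/implyP => pS.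
  by rewrite (run_pairs _ _ _ _ pS).
case: (classic (bifurcating H A)) => bif.
  rewrite (gb bif).
  have := bif h s x hH E => /card_gt1P [y1 [y2 [/imsetP [h1 h1V ->] /imsetP [h2 h2V ->] ne]]].
  have [pp [le1|le2]] := phi_two cost x _ _ cp ne.
    by exists h1 => //; apply: rcost_bound.
  by exists h2 => //; apply: rcost_bound.
rewrite (gn bif); exists h => //; exact: Rcost_bound.
Qed.

Theorem lemma2 (R : realFieldType) (X Y : finType)
  (H : {set {ffun X -> Y}}) (cost : X -> Y -> R)
  (f : {set X * Y} -> R) (Q eta : R) (A : ialg X Y) :
  (forall x y, 0 < cost x y) ->
  (forall S, 0 <= f S) ->
  0 < Q -> 0 < eta ->
  monotone f -> submodular f -> f set0 = 0 ->
  (forall S, Q - eta <= f S -> Q <= f S) ->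
  consistency_aware H f Q ->
  terminates A H ->
  (forall h, h \in H -> Q <= f (final A h)) ->
  forall gamma : R,
  (bifurcating H A -> gamma = rcost cost) ->
  (~ bifurcating H A -> gamma = Rcost cost) ->
  exists x : X, Q / (gamma * costA cost H A) <= ufun H f Q cost x set0.
Proof.
move=> cp f0 Qp _ _ sm fe _ ca term fin gamma gb gn.
have step := gamma_step H cost A gamma cp gb gn.
have V0 : V H set0 = H.
  by apply/setP => h; rewrite inE; apply/andb_idr => _; apply/forallP => p; rewrite inE.
have [h0 h0H] : exists h0, h0 \in H.
  apply/set0Pn; apply/negP => /eqP He.
  have := ca set0; rewrite V0 He fe => /(_ erefl); lra.
set C := costA cost H A.
have C0 : 0 <= C by apply: bigmax_ge_id.
have costA_ge : forall h, h \in H -> costS cost (final A h) <= C.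
  by move=> h hH; apply: (le_bigmax_cond _ (fun h => costS cost (final A h))).
set b := Q / (gamma * C).
case: (classic (exists x, b <= ufun H f Q cost x set0)) => // nex.
exfalso.
have bad : forall x, [exists h in H, ratio_u f Q cost x set0 h < b].
  move=> x; apply: contraT => /existsPn nall.
  exfalso; apply: nex; exists x; rewrite /ufun.
  case: pickP => [h1 h1V|/(_ h0)]; last by rewrite V0 h0H.
  apply: le_bigmin => [|h hH].
    by have := nall h1; rewrite -V0 h1V /= leNgt.
  by have := nall h; rewrite -V0 hH /= leNgt.
pose hx x := odflt h0 [pick h in H | ratio_u f Q cost x set0 h < b].
have hxP : forall x, hx x \in H /\ ratio_u f Q cost x set0 (hx x) < b.
  move=> x; rewrite /hx; case: pickP => [h /andP [-> ->] //|/= Hn].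
  by have := bad x => /existsP [h /andP [hH hr]]; have := Hn h; rewrite hH hr.
pose g : {ffun X -> Y} := [ffun x => hx x x].
have key : forall x, Num.min (f [set (x, g x)]) Q < b * cost x (g x).
  move=> x; have [_ hr] := hxP x; move: hr.
  rewrite /ratio_u /deltaQ setU0 fe ffunE.
  rewrite (_ : Num.min 0 Q = 0); last by apply/min_idPl; apply: ltW.
  by rewrite subr0 ltr_pdivrMr.
pose N := (\max_(h in H) stop_time A h)%N.
have finN : forall h, h \in H -> final A h = run A h N.
  move=> h hH; apply: final_run; first exact: term.
  by rewrite /N; apply: leq_bigmax_cond.
have claim : exists S : {set X * Y}, [/\ S != set0, (forall p, p \in S -> p.2 = g p.1),
    Q <= f S, 1 <= gamma & costS cost S <= gamma * C].
  case: (eqVneq (V H (run A g N)) set0) => [VN|/set0Pn [h hV]]; last first.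
    have ra := run_agree _ _ _ _ _ hV.
    have hH : h \in H by case/inV: hV.
    have SF : run A g N = final A h by rewrite finN // ra.
    have QS : Q <= f (run A g N) by rewrite SF; apply: fin.
    have Sne : run A g N != set0 by apply/eqP => E0; move: QS; rewrite E0 fe; lra.
    have [s [x Ex]] := run_nonempty A h N ltac:(by rewrite ra).
    have [h' _ [g1 _]] := step h s x (g x) hH Ex.
    exists (run A g N); split => //.
      by move=> p; exact: run_pairs.
    apply: le_trans (_ : C <= _); first by rewrite SF; exact: costA_ge.
    by apply: ler_peMl.
  have exP : exists t, V H (run A g t) == set0 by exists N; rewrite VN.
  case: (ex_minnP exP) => t /eqP Vt tmin.
  have tN : (t <= N)%N by apply: tmin; rewrite VN.
  case: t Vt tmin tN => [|s] Vt tmin tN.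
    by move: Vt; rewrite /= V0 => He; move: h0H; rewrite He inE.
  have Vs : V H (run A g s) != set0.
    by apply/negP => /tmin; rewrite ltnn.
  case/set0Pn: Vs => h hV.
  have hH : h \in H by case/inV: hV.
  have ra : run A h s = run A g s := run_agree _ _ _ _ _ hV.
  move: Vt; rewrite /=; case E: (A (run A g s)) => [x|] Vt; last first.
    by move: hV; rewrite Vt inE.
  have [h' h'V [g1 cle]] := step h s x (g x) hH (etrans (f_equal A ra) E).
  rewrite ra in h'V.
  have ne : h' x != g x.
    apply/negP => /eqP eq; have : h' \in V H ((x, g x) |: run A g s).
      case/inV: h'V => h'H hp; rewrite inE h'H /=; apply/forallP => p; apply/implyP.
      by rewrite in_setU1 => /orP [/eqP -> /=|pS]; [rewrite eq | rewrite hp].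
    by rewrite Vt inE.
  have nin : (x, h' x) \notin run A g s.
    by apply/negP => /run_pairs /= eq; rewrite eq eqxx in ne.
  have ra' : run A h' s = run A g s := run_agree _ _ _ _ _ h'V.
  have h'H : h' \in H by case/inV: h'V.
  have sub : run A h' s.+1 \subset final A h'.
    by rewrite finN //; apply: run_mono.
  have c1 := le_trans (costS_sub cost _ _ cp sub) (costA_ge h' h'H).
  rewrite /= ra' E costS_U1_eq //= in c1.
  exists ((x, g x) |: run A g s); split => //.
  - by apply/set0Pn; exists (x, g x); rewrite setU11.
  - move=> p; rewrite in_setU1 => /orP [/eqP -> //| pS]; exact: run_pairs pS.
  - by apply: ca.
  - have h1 := costS_U1 cost (x, g x) (run A g s) cp.
    have h2 := costS_ge0 cost (run A g s) cp.
    have h3 : costS cost (run A g s) <= gamma * costS cost (run A g s) by apply: ler_peMl.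
    have h4 : gamma * (cost x (h' x) + costS cost (run A g s)) <= gamma * C.
      by apply: ler_wpM2l => //; apply: le_trans g1.
    rewrite mulrDr in h4; simpl in h1; lra.
have [S [Sne Sg QS g1 cS]] := claim.
have bD : b * (gamma * C) <= Q.
  rewrite /b; case: (eqVneq (gamma * C) 0) => [->|nz]; first by rewrite mulr0 ltW.
  by rewrite divfK.
have g0 : 0 <= gamma by apply: le_trans g1.
have b0 : 0 <= b by apply: divr_ge0; [exact: ltW | exact: mulr_ge0].
have bS : b * costS cost S <= Q by apply: le_trans bD; apply: ler_wpM2l.
have pin : forall p, p \in S -> Num.min (f [set p]) Q < b * cost p.1 p.2.
  by move=> [x y] /Sg /= ->; exact: key.
case: (boolP [exists p in S, Q <= f [set p]]).
  case/existsP => p /andP [pS Qp'].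
  have := pin p pS; rewrite (min_idPr Qp') => lt.
  have cp1 : cost p.1 p.2 <= costS cost S.
    by have := costS_sub cost [set p] S cp; rewrite sub1set pS /costS big_set1 => /(_ isT).
  have := ler_wpM2l b0 cp1; lra.
move=> /existsPn nall.
have fS := submod_sum f f0 sm fe S.
have : \sum_(p in S) f [set p] < \sum_(p in S) b * cost p.1 p.2.
  apply: ltr_sum.
    by case/set0Pn: Sne => p pS; apply/hasP; exists p => //; rewrite mem_index_enum.
  move=> p pS; have := pin p pS; have := nall p; rewrite pS /= -ltNge => lt.
  by rewrite (min_idPl (ltW lt)).
rewrite -mulr_sumr => lt.
change (\sum_(p in S) cost p.1 p.2) with (costS cost S) in lt.
lra.
Qed.
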